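(* Let $G=(V,E)$ be an unweighted undirected graph with $n$ vertices and $m=|E|$ edges, and let $H$ be a $(1\pm\varepsilon)$-spectral sparsifier of $G$ for some small enough constant $\varepsilon>0$. Let $\widehat{H}$ denote the unweighted version of $H$. If for a pair of vertices $u,v\in V$ we set $s:=d_{\widehat{H}}(u,v)$, then $$R^G_{u,v}=\widetilde{\Omega}\!\left(\frac{s^2}{m}\right)\quad\text{and}\quad R^H_{u,v}=\widetilde{\Omega}\!\left(\frac{s^2}{m}\right).$$
   Context: A $(1\pm\varepsilon)$-spectral sparsifier of $G$ is a weighted graph $H=(V,E_H,w)$ with $E_H\subseteq E$ and positive weights such that $(1-\varepsilon)L_H\preceq L_G\preceq(1+\varepsilon)L_H$, where $L_G=B_G^\top B_G$ ($B_G$ the edge–vertex incidence matrix), $L_H=B_H^\top WB_H$ ($W$ the diagonal matrix of edge weights), and $A\preceq B$ means $x^\top Ax\le x^\top Bx$ for all $x$. $\widehat{H}$ is the graph $(V,E_H)$ with all weights equal to $1$, and $d_{\widehat{H}}$ its shortest-path (hop) distance. The effective resistance between $u,v$ in a graph $K$ is $R^K_{u,v}=b_{uv}^\top L_K^{+}b_{uv}$, where $b_{uv}=\chi_u-\chi_v$ and $L_K^+$ is the Moore–Penrose pseudoinverse. $\widetilde{\Omega}(f)$ means $f/\mathrm{polylog}(n)$. *)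

(* Defs.v *)
From HB Require Import structures.
From Stdlib Require Import Reals ClassicalEpsilon.
From mathcomp Require Import all_boot all_order all_algebra.
From mathcomp Require Import Rstruct.
Set Implicit Arguments. Unset Strict Implicit. Unset Printing Implicit Defensive.
Import Order.TTheory GRing.Theory Num.Theory.
Local Open Scope ring_scope.

(* Vertices are 'I_n.  An edge {u,v} of a simple undirected graph is stored
   once, as the ordered pair (u,v) with u < v. *)
Definition simple_edges (n : nat) (E : {set 'I_n * 'I_n}) : Prop :=
  forall p, p \in E -> (p.1 < p.2)%N.

Definition bvec (n : nat) (u v : 'I_n) : 'rV[R]_n :=
  delta_mx 0 u - delta_mx 0 v.

Definition laplacian (n : nat) (E : {set 'I_n * 'I_n})
    (w : 'I_n * 'I_n -> R) : 'M[R]_n :=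
  \sum_(p in E) w p *: ((bvec p.1 p.2)^T *m bvec p.1 p.2).

Definition loewner_le (n : nat) (A B : 'M[R]_n) : Prop :=
  forall x : 'rV[R]_n, (x *m A *m x^T) 0 0 <= (x *m B *m x^T) 0 0.

Definition spectral_sparsifier (n : nat) (eps : R) (E EH : {set 'I_n * 'I_n})
    (w : 'I_n * 'I_n -> R) : Prop :=
  EH \subset E /\ (forall p, p \in EH -> 0 < w p) /\
  loewner_le ((1 - eps) *: laplacian EH w) (laplacian E (fun _ => 1)) /\
  loewner_le (laplacian E (fun _ => 1)) ((1 + eps) *: laplacian EH w).

Definition is_MP_pinv (n : nat) (A X : 'M[R]_n) : Prop :=
  [/\ A *m X *m A = A, X *m A *m X = X, (A *m X)^T = A *m X & (X *m A)^T = X *m A].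

Definition mp_pinv (n : nat) (A : 'M[R]_n) : 'M[R]_n :=
  epsilon (inhabits 0) (fun X => is_MP_pinv A X).

Definition eff_res (n : nat) (L : 'M[R]_n) (u v : 'I_n) : R :=
  (bvec u v *m mp_pinv L *m (bvec u v)^T) 0 0.

Definition unw_adj (n : nat) (EH : {set 'I_n * 'I_n}) : rel 'I_n :=
  fun x y => ((x, y) \in EH) || ((y, x) \in EH).

Definition hop_dist (n : nat) (adj : rel 'I_n) (u v : 'I_n) (s : nat) : Prop :=
  (exists p : seq 'I_n, [/\ path adj u p, last u p = v & size p = s]) /\
  (forall p : seq 'I_n, path adj u p -> last u p = v -> (s <= size p)%N).

(* Main.v *)
Require Import Defs.
From HB Require Import structures.
From Stdlib Require Import Reals ClassicalEpsilon.
From mathcomp Require Import all_boot all_order all_algebra.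
From mathcomp Require Import Rstruct.
From mathcomp Require Import ring lra.
Import Order.TTheory GRing.Theory Num.Theory.
Set Implicit Arguments. Unset Strict Implicit.
Local Open Scope ring_scope.

Lemma cs_sum (I : finType) (P : pred I) (w a b : I -> R) :
  (forall i, P i -> 0 <= w i) ->
  (\sum_(i | P i) w i * (a i * b i)) ^+ 2 <=
  (\sum_(i | P i) w i * (a i * a i)) * (\sum_(i | P i) w i * (b i * b i)).
Proof.
move=> hw.
set A := \sum_(i | P i) _ * (a i * a i).
set B := \sum_(i | P i) _ * (a i * b i).
set C := \sum_(i | P i) _ * (b i * b i).
have hC : 0 <= C by apply: sumr_ge0 => i Pi; apply: mulr_ge0 (hw _ Pi) _; rewrite -expr2 sqr_ge0.
have key : 0 <= C * (A * C - B ^+ 2).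
  have : 0 <= \sum_(i | P i) w i * ((C * a i - B * b i) ^+ 2).
    by apply: sumr_ge0 => i Pi; apply: mulr_ge0 (hw _ Pi) (sqr_ge0 _).
  have -> : \sum_(i | P i) w i * ((C * a i - B * b i) ^+ 2) =
     C ^+ 2 * A - (2 * C * B) * B + B ^+ 2 * C.
    rewrite (eq_bigr (fun i => C^+2 * (w i * (a i * a i)) - 2*C*B * (w i * (a i * b i)) + B^+2 * (w i * (b i * b i)))); last by move=> i _; ring.
    by rewrite big_split sumrB /= -!mulr_sumr.
  by move=> h; have -> : C * (A * C - B ^+ 2) = C ^+ 2 * A - 2 * C * B * B + B ^+ 2 * C by ring.
have [C0|Cpos] := eqVneq C 0; last first.
  have Cp : 0 < C by rewrite lt0r Cpos hC.
  rewrite pmulr_rge0 // in key; rewrite mulrC; lra.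
have hb : forall i, P i -> w i * b i = 0.
  move=> i Pi; have : w i * (b i * b i) = 0.
    apply/eqP; move: C0 => /eqP; rewrite psumr_eq0 => [/allP H|j Pj].
      by have := H i (mem_index_enum _); rewrite Pi.
    by apply: mulr_ge0 (hw _ Pj) _; rewrite -expr2 sqr_ge0.
  move/eqP; rewrite mulf_eq0 mulf_eq0 orbb => /orP [/eqP -> | /eqP ->]; by rewrite ?mul0r ?mulr0.
have -> : B = 0.
  rewrite /B big1 // => i Pi; by rewrite mulrCA hb ?mulr0.
rewrite C0 mulr0 expr2 mulr0 //.
Qed.
Lemma sq_eq0 (r : nat) (x : 'rV[R]_r) : (x *m x^T) 0 0 = 0 -> x = 0.
Proof.
rewrite !mxE => /eqP; rewrite psumr_eq0 => [/allP H|i _]; last first.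
  by rewrite mxE -expr2 sqr_ge0.
apply/rowP => j; have := H j (mem_index_enum _).
by rewrite mxE -expr2 sqrf_eq0 mxE => /eqP.
Qed.

Lemma gram_unit (r m : nat) (F : 'M[R]_(r, m)) : row_free F -> F *m F^T \in unitmx.
Proof.
move=> hF; rewrite -row_free_unit; apply: inj_row_free => x hx.
have : (x *m F) *m (x *m F)^T = 0 by rewrite trmx_mul !mulmxA -(mulmxA x) hx mul0mx.
move=> h; have h0 : x *m F = 0 by apply: sq_eq0; rewrite h mxE.
by apply/eqP; rewrite -(mulmx_free_eq0 _ hF) h0.
Qed.

Lemma mp_exists_fact (n r : nat) (F : 'M[R]_(n, r)) (G : 'M[R]_(r, n)) :
  row_free G -> row_free F^T -> exists X, is_MP_pinv (F *m G) X.
Proof.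
move=> hG hF.
have uG := gram_unit hG.
have uF := gram_unit hF.
rewrite trmxK in uF.
set P := invmx (G *m G^T); set Q := invmx (F^T *m F).
have PG : P *m (G *m G^T) = 1%:M by rewrite mulVmx.
have QF : Q *m (F^T *m F) = 1%:M by rewrite mulVmx.
have GP : (G *m G^T) *m P = 1%:M by rewrite mulmxV.
have FQ : (F^T *m F) *m Q = 1%:M by rewrite mulmxV.
have PT : P^T = P by rewrite /P trmx_inv trmx_mul trmxK.
have QT : Q^T = Q by rewrite /Q trmx_inv trmx_mul trmxK.
exists (G^T *m P *m Q *m F^T); split.
- have -> : F *m G *m (G^T *m P *m Q *m F^T) *m (F *m G) =
     F *m ((G *m G^T) *m P) *m (Q *m (F^T *m F)) *m G by rewrite !mulmxA.
  by rewrite GP QF !mulmx1.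
- have -> : G^T *m P *m Q *m F^T *m (F *m G) *m (G^T *m P *m Q *m F^T) =
     G^T *m P *m (Q *m (F^T *m F)) *m ((G *m G^T) *m P) *m Q *m F^T by rewrite !mulmxA.
  by rewrite GP QF !mulmx1.
- have -> : F *m G *m (G^T *m P *m Q *m F^T) = F *m ((G *m G^T) *m P) *m Q *m F^T
    by rewrite !mulmxA.
  by rewrite GP mulmx1 !trmx_mul trmxK QT mulmxA.
- have -> : G^T *m P *m Q *m F^T *m (F *m G) = G^T *m P *m (Q *m (F^T *m F)) *m G
    by rewrite !mulmxA.
  by rewrite QF mulmx1 !trmx_mul trmxK PT mulmxA.
Qed.

Lemma mp_exists (n : nat) (A : 'M[R]_n) : exists X, is_MP_pinv A X.
Proof.
rewrite -(mulmx_base A); apply: mp_exists_fact; first exact: row_base_free.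
by rewrite /row_free mxrank_tr; exact: col_base_full.
Qed.

Lemma mp_spec (n : nat) (A : 'M[R]_n) : is_MP_pinv A (mp_pinv A).
Proof.
rewrite /mp_pinv; apply: epsilon_spec; exact: mp_exists.
Qed.
Lemma bvec_col (n : nat) (x : 'rV[R]_n) (a b : 'I_n) :
  (x *m (bvec a b)^T) 0 0 = x 0 a - x 0 b.
Proof.
rewrite /bvec linearB /= !trmx_delta mulmxBr -!colE !mxE //.
Qed.

Lemma mul11 (M N : 'M[R]_1) : (M *m N) 0 0 = M 0 0 * N 0 0.
Proof. by rewrite mxE big_ord1. Qed.

Lemma tr11 (M : 'M[R]_1) : M^T 0 0 = M 0 0.
Proof. by rewrite mxE. Qed.

Lemma lap_form (n : nat) (E : {set 'I_n * 'I_n}) (w : 'I_n * 'I_n -> R)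
  (x y : 'rV[R]_n) :
  (x *m laplacian E w *m y^T) 0 0 =
  \sum_(p in E) w p * ((x 0 p.1 - x 0 p.2) * (y 0 p.1 - y 0 p.2)).
Proof.
rewrite /laplacian mulmx_sumr mulmx_suml summxE; apply: eq_bigr => p _.
rewrite -scalemxAr -scalemxAl mxE; congr (_ * _).
rewrite -!mulmxA mulmxA.
have -> : bvec p.1 p.2 *m y^T = (y *m (bvec p.1 p.2)^T)^T by rewrite trmx_mul trmxK.
by rewrite mul11 tr11 !bvec_col.
Qed.

Lemma lap_tr (n : nat) (E : {set 'I_n * 'I_n}) (w : 'I_n * 'I_n -> R) :
  (laplacian E w)^T = laplacian E w.
Proof.
rewrite /laplacian linear_sum /=; apply: eq_bigr => p _.
by rewrite linearZ /= trmx_mul trmxK.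
Qed.

Lemma path_const (n : nat) (adj : rel 'I_n) (z : 'I_n -> R) :
  (forall a b, adj a b -> z a = z b) ->
  forall u p, path adj u p -> z u = z (last u p).
Proof.
move=> H u p; elim: p u => //= a p IH u /andP[h1 h2].
by rewrite (H _ _ h1); exact: IH.
Qed.

Lemma lap_psd (n : nat) (E : {set 'I_n * 'I_n}) (w : 'I_n * 'I_n -> R) :
  (forall q, q \in E -> 0 < w q) ->
  forall y : 'rV[R]_n, 0 <= (y *m laplacian E w *m y^T) 0 0.
Proof.
move=> hw y; rewrite lap_form; apply: sumr_ge0 => q qE.
by apply: mulr_ge0; [exact: ltW (hw _ qE) | rewrite -expr2 sqr_ge0].
Qed.

Lemma res_lb (n : nat) (E : {set 'I_n * 'I_n}) (w : 'I_n * 'I_n -> R)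
  (u v : 'I_n) (p : seq 'I_n) (x : 'rV[R]_n) :
  (forall q, q \in E -> 0 < w q) -> path (unw_adj E) u p -> last u p = v ->
  0 <= eff_res (laplacian E w) u v /\
  (x 0 u - x 0 v) ^+ 2 <= eff_res (laplacian E w) u v * (x *m laplacian E w *m x^T) 0 0.
Proof.
move=> hw hp hl.
set L := laplacian E w; set b := bvec u v.
have [h1 h2 h3 h4] := mp_spec L; set X := mp_pinv L in h1 h2 h3 h4.
have LT : L^T = L by exact: lap_tr.
have psd := lap_psd hw.
set z := b - b *m X *m L.
have Lz : L *m z^T = 0.
  by rewrite /z linearB /= mulmxBr -mulmxA trmx_mul h4 !mulmxA h1 subrr.
have Qz : (z *m L *m z^T) 0 0 = 0 by rewrite -mulmxA Lz mulmx0 mxE.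
have edge : forall q, q \in E -> z 0 q.1 = z 0 q.2.
  move=> q qE; move: Qz; rewrite lap_form => /eqP; rewrite psumr_eq0 => [/allP H|j jE].
    have := H q (mem_index_enum _); rewrite qE /= mulf_eq0 (gt_eqF (hw _ qE)) /=.
    by rewrite -expr2 sqrf_eq0 subr_eq0 => /eqP.
  by apply: mulr_ge0; [exact: ltW (hw _ jE) | rewrite -expr2 sqr_ge0].
have zuv : z 0 u = z 0 v.
  rewrite -hl; apply: (@path_const _ (unw_adj E) (fun a => z 0 a)) hp.
  move=> a c; rewrite /unw_adj => /orP [h|h]; first exact: (edge _ h).
  by rewrite (edge _ h).
have zb : (z *m b^T) 0 0 = 0 by rewrite bvec_col zuv subrr.
have zXL : z *m X *m L = 0.
  by rewrite -mulmxA -h4 -{1}(trmxK z) -trmx_mul -mulmxA Lz mulmx0 trmx0.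
have zz : (z *m z^T) 0 0 = 0.
  rewrite {2}/z linearB /= mulmxBr -(mulmxA b) trmx_mul h4 !mulmxA zXL mul0mx subr0.
  exact: zb.
have z0 : z = 0 := sq_eq0 zz.
have bb : b = b *m X *m L by move/eqP: z0; rewrite subr_eq0 => /eqP.
have bT : b^T = L *m X^T *m b^T by rewrite {1}bb !trmx_mul LT mulmxA.
set y := b *m X.
have R_eq : eff_res L u v = (y *m L *m y^T) 0 0.
  by rewrite /eff_res -/b -/X {1}bT /y trmx_mul !mulmxA.
have bx : (x *m b^T) 0 0 = (x *m L *m y^T) 0 0.
  by rewrite {1}bT /y trmx_mul !mulmxA.
split; first by rewrite R_eq psd.
rewrite -bvec_col bx R_eq !lap_form.
rewrite mulrC.
apply: (cs_sum (P := fun q => q \in E)) => q qE; exact: ltW (hw _ qE).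
Qed.

Section Reach.
Variables (n : nat) (adj : rel 'I_n) (u : 'I_n).

Fixpoint reach (k : nat) : {set 'I_n} :=
  match k with
  | 0 => [set u]
  | k.+1 => reach k :|: [set c | [exists a in reach k, adj a c]]
  end.

Lemma reach_u k : u \in reach k.
Proof. by elim: k => [|k IH] /=; rewrite ?set11 // in_setU IH. Qed.

Lemma reach_adj k a c : a \in reach k -> adj a c -> c \in reach k.+1.
Proof.
move=> ha hac /=; rewrite in_setU; apply/orP; right; rewrite inE.
by apply/existsP; exists a; rewrite ha.
Qed.

Lemma reach_path k a : a \in reach k ->
  exists p, [/\ path adj u p, last u p = a & (size p <= k)%N].
Proof.
elim: k a => [|k IH] a /=.
  by rewrite inE => /eqP ->; exists [::].
rewrite in_setU => /orP [h|]; first by have [p [h1 h2 h3]] := IH _ h; exists p; split => //; rewrite ltnW.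
rewrite inE => /existsP [b /andP [hb hba]].
have [p [h1 h2 h3]] := IH _ hb; exists (rcons p a); split.
- by rewrite rcons_path h1 h2.
- by rewrite last_rcons.
- by rewrite size_rcons.
Qed.

Definition cnt (s : nat) (a : 'I_n) : nat := \sum_(k < s) (a \notin reach k).

Lemma cnt_u s : cnt s u = 0%N.
Proof. by rewrite /cnt big1 // => k _; rewrite reach_u. Qed.

Lemma cnt_adj s a c : adj a c -> (cnt s c <= (cnt s a).+1)%N.
Proof.
move=> hac; case: s => [|s]; first by rewrite /cnt !big_ord0.
rewrite /cnt big_ord_recl big_ord_recr /=.
rewrite -addn1 addnC leq_add //; last by case: (_ \notin _).
apply: leq_trans (leq_addr _ _).
apply: leq_sum => k _; rewrite add0n.
case ha: (a \in reach k) => /=; last by case: (_ \notin _).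
by have := reach_adj ha hac => /= ->.
Qed.
End Reach.

Lemma scale_form (n : nat) (c : R) (M : 'M[R]_n) (x : 'rV[R]_n) :
  (x *m (c *: M) *m x^T) 0 0 = c * (x *m M *m x^T) 0 0.
Proof. by rewrite -scalemxAr -scalemxAl mxE. Qed.

Lemma delta_sq_lb (n : nat) (q1 q2 : 'I_n) : q1 != q2 ->
  1 <= \sum_(a : 'I_n) ((delta_mx 0 a : 'rV[R]_n) 0 q1 - (delta_mx 0 a : 'rV[R]_n) 0 q2)
       * ((delta_mx 0 a : 'rV[R]_n) 0 q1 - (delta_mx 0 a : 'rV[R]_n) 0 q2).
Proof.
move=> hq; rewrite (bigD1 q1) //= !mxE !eqxx /= eq_sym (negbTE hq) subr0 mulr1.
rewrite lerDl; apply: sumr_ge0 => a _; rewrite -expr2 sqr_ge0 //.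
Qed.

Lemma delta_sq_ub (n : nat) (q1 q2 : 'I_n) :
  \sum_(a : 'I_n) ((delta_mx 0 a : 'rV[R]_n) 0 q1 - (delta_mx 0 a : 'rV[R]_n) 0 q2)
       * ((delta_mx 0 a : 'rV[R]_n) 0 q1 - (delta_mx 0 a : 'rV[R]_n) 0 q2) <= 2.
Proof.
have sd : forall j : 'I_n, \sum_(a : 'I_n) ((a == j)%:R : R) = 1.
  move=> j; rewrite (bigD1 j) //= eqxx big1 ?addr0 // => i /negbTE -> //.
apply: le_trans (_ : \sum_(a : 'I_n) (((a == q1)%:R : R) + (a == q2)%:R) <= 2).
  apply: ler_sum => a _; rewrite !mxE /= ![q1 == a]eq_sym ![q2 == a]eq_sym.
  case: (a == q1); case: (a == q2); rewrite /=; lra.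
by rewrite big_split /= !sd.
Qed.

Lemma quad_sum_delta (n : nat) (E : {set 'I_n * 'I_n}) (w : 'I_n * 'I_n -> R) :
  \sum_(a : 'I_n) ((delta_mx 0 a : 'rV[R]_n) *m laplacian E w *m (delta_mx 0 a : 'rV[R]_n)^T) 0 0 =
  \sum_(q in E) w q * \sum_(a : 'I_n)
     (((delta_mx 0 a : 'rV[R]_n) 0 q.1 - (delta_mx 0 a : 'rV[R]_n) 0 q.2)
       * ((delta_mx 0 a : 'rV[R]_n) 0 q.1 - (delta_mx 0 a : 'rV[R]_n) 0 q.2)).
Proof.
rewrite (eq_bigr _ (fun a _ => lap_form E w _ _)) exchange_big /=.
by apply: eq_bigr => q _; rewrite mulr_sumr.
Qed.

Theorem corollary4p3 :
  exists eps0 : R, 0 < eps0 /\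
  forall eps : R, 0 < eps -> eps <= eps0 ->
  exists c : R, 0 < c /\ exists k : nat,
  forall (n : nat) (E EH : {set 'I_n * 'I_n}) (w : 'I_n * 'I_n -> R)
         (u v : 'I_n) (s : nat),
    (2 <= n)%N ->
    simple_edges E ->
    spectral_sparsifier eps E EH w ->
    hop_dist (unw_adj EH) u v s ->
    c * (s%:R ^+ 2) / (#|E|%:R * (ln n%:R) ^+ k)
      <= eff_res (laplacian E (fun _ => 1)) u v /\
    c * (s%:R ^+ 2) / (#|E|%:R * (ln n%:R) ^+ k)
      <= eff_res (laplacian EH w) u v.
Proof.
exists (1/2); split; first lra.
move=> eps e0 e1; exists (1/6); split; first lra.
exists 0%N.
move=> n E EH w u v s hn hsE [hsub [hwpos [hlo hhi]]] [[p [hp hl hs]] hmin].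
rewrite expr0 mulr1.
set adj := unw_adj EH.
set x : 'rV[R]_n := \row_a ((cnt adj u s a)%:R : R).
have xe : forall a, x 0 a = (cnt adj u s a)%:R by move=> a; rewrite mxE.
have xu : x 0 u = 0 by rewrite xe cnt_u.
have xv : x 0 v = s%:R.
  rewrite xe /cnt; congr (_%:R).
  rewrite (eq_bigr (fun _ => 1%N)) ?sum1_card ?card_ord // => k _.
  case hv: (v \in reach adj u k) => //=.
  have [q [q1 q2 q3]] := reach_path hv.
  have h := hmin _ q1 q2.
  have := leq_trans h q3; by rewrite leqNgt ltn_ord.
have xdiff : forall a c, adj a c -> (x 0 a - x 0 c) * (x 0 a - x 0 c) <= 1.
  move=> a c hac.
  have h1 := @cnt_adj _ _ u s _ _ hac.
  have h2 : adj c a by rewrite /adj /unw_adj orbC.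
  have h3 := @cnt_adj _ _ u s _ _ h2.
  have h1' : (cnt adj u s c)%:R <= (cnt adj u s a)%:R + 1 :> R by rewrite natr1 ler_nat.
  have h3' : (cnt adj u s a)%:R <= (cnt adj u s c)%:R + 1 :> R by rewrite natr1 ler_nat.
  rewrite !xe; nra.
set QH := (x *m laplacian EH w *m x^T) 0 0.
set QG := (x *m laplacian E (fun _ => 1) *m x^T) 0 0.
set W := \sum_(q in EH) w q.
set SH := \sum_(a : 'I_n) ((delta_mx 0 a : 'rV[R]_n) *m laplacian EH w *m (delta_mx 0 a : 'rV[R]_n)^T) 0 0.
set SG := \sum_(a : 'I_n) ((delta_mx 0 a : 'rV[R]_n) *m laplacian E (fun _ => 1) *m (delta_mx 0 a : 'rV[R]_n)^T) 0 0.
have QH0 : 0 <= QH by exact: lap_psd.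
have QH_W : QH <= W.
  rewrite /QH lap_form; apply: ler_sum => q qE.
  rewrite -{2}(mulr1 (w q)); apply: ler_wpM2l; first exact: ltW (hwpos _ qE).
  by apply: xdiff; rewrite /adj /unw_adj -surjective_pairing qE.
have W_S : W <= SH.
  rewrite /SH quad_sum_delta; apply: ler_sum => q qE.
  rewrite -{1}(mulr1 (w q)); apply: ler_wpM2l; first exact: ltW (hwpos _ qE).
  apply: delta_sq_lb.
  by move: (hsE _ (subsetP hsub _ qE)); rewrite ltn_neqAle => /andP[].
have SG_m : SG <= 2 * #|E|%:R.
  rewrite /SG quad_sum_delta.
  apply: (le_trans (y := \sum_(q in E) (2:R))).
    by apply: ler_sum => q _; rewrite mul1r; exact: delta_sq_ub.
  by rewrite sumr_const mulr_natr.
have SHG : (1 - eps) * SH <= SG.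
  rewrite /SH /SG mulr_sumr; apply: ler_sum => a _.
  by have := hlo (delta_mx 0 a); rewrite scale_form.
have hQG : QG <= (1 + eps) * QH by have := hhi x; rewrite scale_form.
have [RH0 RH] := @res_lb n EH w u v p x hwpos hp hl.
have hpG : path (unw_adj E) u p.
  apply: sub_path hp => a c; rewrite /unw_adj => /orP [h|h]; apply/orP;
    [left|right]; exact: (subsetP hsub _ h).
have [RG0 RG] := @res_lb n E (fun _ => 1) u v p x (fun q _ => ltr01) hpG hl.
rewrite -/QH in RH; rewrite -/QG in RG.
rewrite xu xv sub0r sqrrN in RH RG.
set m := #|E|%:R in SG_m *.
have m0 : 0 <= m by rewrite /m ler0n.
have [mz|mnz] := eqVneq m 0.
  by rewrite mz invr0 !mulr0.
have mp : 0 < m by rewrite lt0r mnz m0.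
have SH4 : SH <= 4 * m by nra.
have QH4 : QH <= 4 * m by lra.
have QG6 : QG <= 6 * m by nra.
set rH := eff_res (laplacian EH w) u v in RH0 RH *.
set rG := eff_res (laplacian E (fun=> 1)) u v in RG0 RG *.
have e1' : rH * QH <= rH * (4 * m) by apply: ler_wpM2l.
have e2' : rG * QG <= rG * (6 * m) by apply: ler_wpM2l.
rewrite !ler_pdivrMr //; split; nra.
Qed.
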